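(* Let $G=(V,E,m,w)$ be a weighted graph admitting an intrinsic metric $\rho$ with finite balls and finite jump size $s=\sup_{x\sim y}\rho(x,y)$. Suppose $G$ has polynomial volume growth: there are $x_0\in V$ and constants $\alpha, C$ with $m(B_R(x_0))\le C(1+R)^{\alpha}$ for all $R>0$. Let $k>0$ and $u\in\mathcal{P}_k(G)$. Then for any $q\in\mathbb{N}$ with $4q>2k+\alpha+2$, $\partial_t^q u\equiv 0$. In particular, there exist functions $p_i$ on $V$, $0\le i\le q-1$, such that $u(x,t)=\sum_{i=0}^{q-1}p_i(x)t^i$.
   Context: A weighted graph $G=(V,E,m,w)$ consists of a locally finite, simple, undirected, connected graph $(V,E)$, a symmetric edge weight $w:E\to(0,\infty)$, and a vertex weight $m:V\to(0,\infty)$; $m(\Omega)=\sum_{x\in\Omega}m_x$. The Laplacian is $\Delta f(x)=\sum_{y\sim x}\frac{w_{xy}}{m_x}(f(y)-f(x))$. A (pseudo)metric $\rho$ on $V$ is intrinsic if $\sum_{y\sim x}w_{xy}\rho^2(x,y)\le m_x$ for all $x$; $B_R(x)=\{y:\rho(y,x)\le R\}$. An ancient solution is a function $u(x,t)$ on $V\times(-\infty,0]$, (infinitely) differentiable in $t$, with $\partial_t u=\Delta u$. $\mathcal{P}_k(G)$ is the space of ancient solutions $u$ for which there are $x_0\in V$ and $C_u$ with $\sup_{B_R(x_0)\times[-R^2,0]}|u|\le C_u(1+R)^k$ for all $R>0$. *)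

(* Defs.v *)
From Stdlib Require Import Reals Lra List Relations.
From Coquelicot Require Import Coquelicot.
Open Scope R_scope.

Definition sumL (l : list R) : R := fold_right Rplus 0 l.

(* A weighted graph G = (V,E,m,w).  Local finiteness is built in: the
   neighbourhood of x is the finite duplicate-free list [nbr x]. *)
Record wgraph (V : Type) := WGraph {
  nbr : V -> list V;
  wt : V -> V -> R;
  ms : V -> R;
  nbr_nodup : forall x, NoDup (nbr x);
  nbr_sym : forall x y, In y (nbr x) -> In x (nbr y);
  nbr_irrefl : forall x, ~ In x (nbr x);
  nbr_conn : forall x y,
      clos_refl_trans V (fun a b => In b (nbr a)) x y;
  wt_sym : forall x y, wt x y = wt y x;
  wt_pos : forall x y, In y (nbr x) -> 0 < wt x y;
  ms_pos : forall x, 0 < ms x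
}.
Arguments nbr {V}. Arguments wt {V}. Arguments ms {V}.

Definition adj {V} (G : wgraph V) (x y : V) : Prop := In y (nbr G x).

Definition laplacian {V} (G : wgraph V) (f : V -> R) (x : V) : R :=
  sumL (map (fun y => wt G x y / ms G x * (f y - f x)) (nbr G x)).

Definition pseudometric {V} (rho : V -> V -> R) : Prop :=
  (forall x y, 0 <= rho x y) /\ (forall x, rho x x = 0) /\
  (forall x y, rho x y = rho y x) /\
  (forall x y z, rho x z <= rho x y + rho y z).

Definition intrinsic {V} (G : wgraph V) (rho : V -> V -> R) : Prop :=
  pseudometric rho /\
  forall x, sumL (map (fun y => wt G x y * (rho x y)^2) (nbr G x)) <= ms G x.

Definition ball_enum {V} (rho : V -> V -> R) (x : V) (Rr : R) (l : list V) : Prop :=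
  NoDup l /\ forall y, In y l <-> rho y x <= Rr.

Definition finite_balls {V} (rho : V -> V -> R) : Prop :=
  forall x Rr, exists l, ball_enum rho x Rr l.

(* m(Ω) for a finite set Ω given by a duplicate-free enumeration. *)
Definition mass {V} (G : wgraph V) (l : list V) : R := sumL (map (ms G) l).

Definition finite_jump {V} (G : wgraph V) (rho : V -> V -> R) : Prop :=
  exists s, forall x y, adj G x y -> rho x y <= s.

Definition poly_growth_with {V} (G : wgraph V) (rho : V -> V -> R)
  (alpha : R) : Prop :=
  exists (x0 : V) (C : R), forall Rr l, 0 < Rr ->
    ball_enum rho x0 Rr l -> mass G l <= C * Rpower (1 + Rr) alpha.

Definition is_left_derive (f : R -> R) (t l : R) : Prop :=
  filterlim (fun h => (f (t + h) - f t) / h) (at_left 0) (locally l).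

(* Ancient solution: u : V -> (-∞,0] -> R (values for t > 0 are irrelevant),
   ∂_t u = Δu on V × (-∞,0]; at t = 0 the derivative is one-sided. *)
Definition ancient {V} (G : wgraph V) (u : V -> R -> R) : Prop :=
  forall x,
    (forall t, t < 0 -> is_derive (u x) t (laplacian G (fun y => u y t) x)) /\
    is_left_derive (u x) 0 (laplacian G (fun y => u y 0) x).

Definition in_Pk {V} (G : wgraph V) (rho : V -> V -> R) (k : R)
  (u : V -> R -> R) : Prop :=
  ancient G u /\
  exists (x0 : V) (Cu : R), forall Rr, 0 < Rr ->
    forall y t, rho y x0 <= Rr -> - Rr^2 <= t <= 0 ->
      Rabs (u y t) <= Cu * Rpower (1 + Rr) k.

(* Main.v *)
Require Import Defs.
From Stdlib Require Import Reals List.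
From Coquelicot Require Import Coquelicot.
From Stdlib Require Import Lra Psatz Classical ClassicalEpsilon.
Open Scope R_scope.

Lemma sumL_app l1 l2 : sumL (l1 ++ l2) = sumL l1 + sumL l2.
Proof. induction l1; simpl; [lra| rewrite IHl1; lra]. Qed.

Lemma sumL_map_plus {A} (f g : A -> R) l :
  sumL (map (fun x => f x + g x) l) = sumL (map f l) + sumL (map g l).
Proof. induction l; simpl; [lra| rewrite IHl; lra]. Qed.

Lemma sumL_map_scal {A} c (f : A -> R) l :
  sumL (map (fun x => c * f x) l) = c * sumL (map f l).
Proof. induction l; simpl; [lra| rewrite IHl; lra]. Qed.

Lemma sumL_map_ext_in {A} (f g : A -> R) l :
  (forall x, In x l -> f x = g x) -> sumL (map f l) = sumL (map g l).
Proof.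
  induction l; simpl; intros H; [lra|].
  rewrite H by auto. rewrite IHl by auto. lra.
Qed.

Lemma sumL_map_le {A} (f g : A -> R) l :
  (forall x, In x l -> f x <= g x) -> sumL (map f l) <= sumL (map g l).
Proof.
  induction l; simpl; intros H; [lra|].
  assert (sumL (map f l) <= sumL (map g l)) by (apply IHl; auto).
  specialize (H a (or_introl eq_refl)). lra.
Qed.

Lemma sumL_map_nonneg {A} (f : A -> R) l :
  (forall x, In x l -> 0 <= f x) -> 0 <= sumL (map f l).
Proof.
  intros H. replace 0 with (sumL (map (fun _ : A => 0) l)).
  apply sumL_map_le; auto. clear H. induction l; simpl; [auto| rewrite IHl; lra].
Qed.

Lemma sumL_map_zero {A} (f : A -> R) l :
  (forall x, In x l -> f x = 0) -> sumL (map f l) = 0.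
Proof.
  induction l; simpl; intros H; [lra|]. rewrite H by auto. rewrite IHl by auto. lra.
Qed.

Lemma sumL_ext_support {A} (g : A -> R) l1 l2 :
  NoDup l1 -> NoDup l2 ->
  (forall y, In y l1 -> ~ In y l2 -> g y = 0) ->
  (forall y, In y l2 -> ~ In y l1 -> g y = 0) ->
  sumL (map g l1) = sumL (map g l2).
Proof.
  revert l2. induction l1 as [|a l1 IH]; intros l2 N1 N2 H1 H2.
  - simpl. symmetry. apply sumL_map_zero. intros y Hy. apply H2; auto.
  - inversion N1 as [|? ? Na N1']; subst.
    destruct (classic (In a l2)) as [Ha|Ha].
    + destruct (in_split a l2 Ha) as [La [Lb ->]].
      assert (N3 : NoDup (La ++ Lb)) by (eapply NoDup_remove_1; eauto).
      assert (Nb : ~ In a (La ++ Lb)) by (eapply NoDup_remove_2; eauto).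
      rewrite map_app, sumL_app. simpl.
      rewrite (IH (La ++ Lb)); auto.
      * rewrite map_app, sumL_app. lra.
      * intros y Hy Hn. apply H1; [simpl; auto|].
        intro Hc. apply in_app_iff in Hc. simpl in Hc.
        destruct Hc as [Hc|[Hc|Hc]]; [apply Hn; apply in_app_iff; auto| subst; contradiction|apply Hn; apply in_app_iff; auto].
      * intros y Hy Hn. apply H2.
        -- apply in_app_iff in Hy. apply in_app_iff. simpl. tauto.
        -- intros [Hc|Hc]; [subst; contradiction|contradiction].
    + simpl. rewrite (H1 a) by (simpl; auto).
      rewrite (IH l2); auto; [lra| |].
      * intros y Hy Hn. apply H1; simpl; auto.
      * intros y Hy Hn. apply H2; auto. intros [Hc|Hc]; [subst; contradiction|contradiction].
Qed.

Lemma sumL_sub {A} (g : A -> R) S L :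
  NoDup S -> (forall y, In y S -> In y L) -> (forall y, In y L -> 0 <= g y) ->
  sumL (map g S) <= sumL (map g L).
Proof.
  revert L. induction S as [|a S IH]; intros L NS HS Hg.
  - simpl. apply sumL_map_nonneg; auto.
  - inversion NS as [|? ? Na NS']; subst.
    destruct (in_split a L (HS a (or_introl eq_refl))) as [La [Lb ->]].
    rewrite map_app, sumL_app. simpl.
    assert (sumL (map g S) <= sumL (map g (La ++ Lb))).
    { apply IH; auto.
      - intros y Hy. assert (Hy' := HS y (or_intror Hy)).
        apply in_app_iff in Hy'. apply in_app_iff. simpl in Hy'.
        destruct Hy' as [?|[?|?]]; auto. subst; contradiction.
      - intros y Hy. apply Hg. apply in_app_iff in Hy. apply in_app_iff. simpl. tauto. }
    rewrite map_app, sumL_app in H. lra.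
Qed.

Lemma sumL_swap {A B} (h : A -> B -> R) l1 l2 :
  sumL (map (fun x => sumL (map (fun y => h x y) l2)) l1) =
  sumL (map (fun y => sumL (map (fun x => h x y) l1)) l2).
Proof.
  induction l1 as [|a l1 IH]; simpl.
  - symmetry. apply sumL_map_zero. auto.
  - rewrite IH. rewrite <- sumL_map_plus. reflexivity.
Qed.


Definition ind (P : Prop) (c : R) : R :=
  if excluded_middle_informative P then c else 0.

Lemma ind_iff P Q c : (P <-> Q) -> ind P c = ind Q c.
Proof.
  intros H. unfold ind. destruct (excluded_middle_informative P), (excluded_middle_informative Q); tauto.
Qed.

Lemma sum_nbr_as_L {V} (G : wgraph V) (F : V -> R) x L :
  NoDup L -> (forall y, adj G x y -> F y <> 0 -> In y L) ->
  sumL (map F (nbr G x)) = sumL (map (fun y => ind (adj G x y) (F y)) L).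
Proof.
  intros NL H.
  rewrite (sumL_map_ext_in F (fun y => ind (adj G x y) (F y))).
  2:{ intros y Hy. unfold ind. destruct (excluded_middle_informative (adj G x y)); auto. contradiction. }
  apply sumL_ext_support; auto.
  - apply nbr_nodup.
  - intros y Hy Hn. unfold ind. destruct (excluded_middle_informative (adj G x y)); auto.
    destruct (Req_dec (F y) 0); auto. exfalso. apply Hn. auto.
  - intros y Hy Hn. unfold ind. destruct (excluded_middle_informative (adj G x y)); auto. contradiction.
Qed.

Lemma sym_sum {V} (G : wgraph V) (F : V -> V -> R) L :
  NoDup L -> (forall x y, adj G x y -> F x y <> 0 -> In x L /\ In y L) ->
  sumL (map (fun x => sumL (map (fun y => F x y) (nbr G x))) L) =
  sumL (map (fun x => sumL (map (fun y => F y x) (nbr G x))) L).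
Proof.
  intros NL H.
  rewrite (sumL_map_ext_in _ (fun x => sumL (map (fun y => ind (adj G x y) (F x y)) L))).
  2:{ intros x Hx. apply sum_nbr_as_L; auto. intros y Ha Hn. apply (H x y Ha Hn). }
  rewrite (sumL_map_ext_in (fun x => sumL (map (fun y => F y x) (nbr G x)))
            (fun x => sumL (map (fun y => ind (adj G x y) (F y x)) L))).
  2:{ intros x Hx. apply sum_nbr_as_L; auto. intros y Ha Hn.
      apply (H y x); auto. apply (@nbr_sym _ G). exact Ha. }
  rewrite (sumL_swap (fun x y => ind (adj G x y) (F y x))).
  apply sumL_map_ext_in. intros x Hx. apply sumL_map_ext_in. intros y Hy.
  apply ind_iff. split; apply (@nbr_sym _ G).
Qed.

Lemma lap_mul {V} (G : wgraph V) (g : V -> R) x :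
  laplacian G g x * ms G x = sumL (map (fun y => wt G x y * (g y - g x)) (nbr G x)).
Proof.
  unfold laplacian.
  rewrite (sumL_map_ext_in _ (fun y => / ms G x * (wt G x y * (g y - g x)))).
  2:{ intros y _. unfold Rdiv. ring. }
  rewrite sumL_map_scal. assert (ms G x > 0) by apply ms_pos. field. lra.
Qed.

Lemma wt_nonneg {V} (G : wgraph V) x y : adj G x y -> 0 <= wt G x y.
Proof. intros H. left. apply wt_pos. exact H. Qed.

Lemma lip_sum {V} (G : wgraph V) rho (chi : V -> R) K :
  intrinsic G rho -> 0 <= K ->
  (forall x y, adj G x y -> (chi y - chi x)^2 <= K * (rho x y)^2) ->
  forall x, sumL (map (fun y => wt G x y * (chi y - chi x)^2) (nbr G x)) <= K * ms G x.
Proof.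
  intros [_ Hi] HK Hl x.
  apply Rle_trans with (sumL (map (fun y => K * (wt G x y * (rho x y)^2)) (nbr G x))).
  - apply sumL_map_le. intros y Hy. assert (0 <= wt G x y) by (apply wt_nonneg; exact Hy).
    specialize (Hl x y Hy). nra.
  - rewrite sumL_map_scal. apply Rmult_le_compat_l; auto.
Qed.

Definition clamp (a : R) := Rmin 1 (Rmax 0 a).

Lemma clamp_lip a b : Rabs (clamp a - clamp b) <= Rabs (a - b).
Proof.
  unfold clamp, Rmin, Rmax.
  repeat (destruct Rle_dec); unfold Rabs; repeat (destruct Rcase_abs); lra.
Qed.

Lemma clamp_range a : 0 <= clamp a <= 1.
Proof. unfold clamp, Rmin, Rmax. repeat (destruct Rle_dec); lra. Qed.

Definition cut {V} (rho : V -> V -> R) (o : V) (c r : R) (x : V) : R :=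
  clamp ((c + r - rho x o) / r).

Lemma cut_range {V} rho (o : V) c r x : 0 <= cut rho o c r x <= 1.
Proof. apply clamp_range. Qed.

Lemma cut_one {V} rho (o : V) c r x : 0 < r -> rho x o <= c -> cut rho o c r x = 1.
Proof.
  intros Hr H. unfold cut, clamp, Rmin, Rmax.
  assert (1 <= (c + r - rho x o) / r).
  { apply (Rmult_le_reg_r r); auto. unfold Rdiv. rewrite Rmult_assoc, Rinv_l by lra. lra. }
  repeat (destruct Rle_dec); lra.
Qed.

Lemma cut_nz {V} rho (o : V) c r x : 0 < r -> cut rho o c r x <> 0 -> rho x o < c + r.
Proof.
  intros Hr H. destruct (Rlt_dec (rho x o) (c + r)) as [?|Hn]; auto. exfalso. apply H.
  unfold cut, clamp, Rmin, Rmax.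
  assert ((c + r - rho x o) / r <= 0).
  { apply (Rmult_le_reg_r r); auto. unfold Rdiv. rewrite Rmult_assoc, Rinv_l by lra. lra. }
  repeat (destruct Rle_dec); lra.
Qed.

Lemma cut_lip {V} rho (o : V) c r : pseudometric rho -> 0 < r ->
  forall x y, (cut rho o c r y - cut rho o c r x)^2 <= (/ r^2) * (rho x y)^2.
Proof.
  intros [Hnn [H0 [Hs Ht]]] Hr x y.
  assert (A := clamp_lip ((c + r - rho y o) / r) ((c + r - rho x o) / r)).
  unfold cut.
  set (d := clamp ((c + r - rho y o) / r) - clamp ((c + r - rho x o) / r)) in *.
  replace ((c + r - rho y o) / r - (c + r - rho x o) / r) with ((rho x o - rho y o) / r) in A by (field; lra).
  assert (B : Rabs (rho x o - rho y o) <= rho x y).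
  { assert (T1 := Ht x y o). assert (T2 := Ht y x o). rewrite (Hs y x) in T2.
    unfold Rabs; destruct Rcase_abs; lra. }
  rewrite Rabs_div in A by lra. rewrite (Rabs_right r) in A by lra.
  assert (C : Rabs d <= rho x y / r).
  { eapply Rle_trans; [exact A|]. unfold Rdiv. apply Rmult_le_compat_r; [left; apply Rinv_0_lt_compat; lra| exact B]. }
  assert (D: d^2 <= (rho x y / r)^2).
  { rewrite <- (pow2_abs d). assert (0 <= Rabs d) by apply Rabs_pos. nra. }
  eapply Rle_trans; [exact D|]. right. field. lra.
Qed.


Definition sum2 {V} (G : wgraph V) (L : list V) (h : V -> V -> R) : R :=
  sumL (map (fun x => sumL (map (fun y => h x y) (nbr G x))) L).

Lemma sum2_plus {V} (G : wgraph V) L h1 h2 :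
  sum2 G L (fun x y => h1 x y + h2 x y) = sum2 G L h1 + sum2 G L h2.
Proof.
  unfold sum2. rewrite <- sumL_map_plus. apply sumL_map_ext_in. intros. apply sumL_map_plus.
Qed.

Lemma sum2_scal {V} (G : wgraph V) L c h :
  sum2 G L (fun x y => c * h x y) = c * sum2 G L h.
Proof.
  unfold sum2. rewrite <- sumL_map_scal. apply sumL_map_ext_in. intros. apply sumL_map_scal.
Qed.

Lemma sum2_le {V} (G : wgraph V) L h1 h2 :
  (forall x y, In x L -> adj G x y -> h1 x y <= h2 x y) -> sum2 G L h1 <= sum2 G L h2.
Proof.
  intros H. unfold sum2. apply sumL_map_le. intros x Hx. apply sumL_map_le. intros y Hy. apply H; auto.
Qed.

Lemma sum2_ext {V} (G : wgraph V) L h1 h2 :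
  (forall x y, In x L -> adj G x y -> h1 x y = h2 x y) -> sum2 G L h1 = sum2 G L h2.
Proof.
  intros H. unfold sum2. apply sumL_map_ext_in. intros x Hx. apply sumL_map_ext_in. intros y Hy. apply H; auto.
Qed.

Lemma sum2_sym {V} (G : wgraph V) L h :
  NoDup L -> (forall x y, adj G x y -> h x y <> 0 -> In x L /\ In y L) ->
  sum2 G L h = sum2 G L (fun x y => h y x).
Proof. intros. unfold sum2. apply sym_sum; auto. Qed.

Lemma sum2_nonneg {V} (G : wgraph V) L h :
  (forall x y, In x L -> adj G x y -> 0 <= h x y) -> 0 <= sum2 G L h.
Proof.
  intros H. unfold sum2. apply sumL_map_nonneg. intros x Hx. apply sumL_map_nonneg. intros y Hy. apply H; auto.
Qed.

Lemma sum2_sub {V} (G : wgraph V) S L h :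
  NoDup S -> (forall y, In y S -> In y L) ->
  (forall x y, In x L -> adj G x y -> 0 <= h x y) -> sum2 G S h <= sum2 G L h.
Proof.
  intros NS HS H. unfold sum2. apply sumL_sub; auto. intros x Hx. apply sumL_map_nonneg.
  intros y Hy. apply H; auto.
Qed.

Lemma sum_lap {V} (G : wgraph V) (g : V -> R) x c :
  sumL (map (fun y => c * (wt G x y * (g y - g x))) (nbr G x)) = c * (laplacian G g x * ms G x).
Proof. rewrite sumL_map_scal, lap_mul. reflexivity. Qed.

Definition Mass {V} (G : wgraph V) (L : list V) (g : V -> R) : R :=
  sumL (map (fun x => ms G x * (g x)^2) L).

Definition Grad {V} (G : wgraph V) (S : list V) (g : V -> R) : R :=
  sum2 G S (fun x y => wt G x y * (g y - g x)^2).

Definition Ener {V} (G : wgraph V) (L : list V) (chi g : V -> R) : R :=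
  sumL (map (fun x => ms G x * (chi x)^2 * (g x)^2) L).

Definition EnerD {V} (G : wgraph V) (L : list V) (chi g h : V -> R) : R :=
  sumL (map (fun x => ms G x * (chi x)^2 * (2 * g x * h x)) L).

Definition QE {V} (G : wgraph V) (S : list V) (phi g : V -> R) : R :=
  sum2 G S (fun x y => wt G x y * phi x * phi y * (g y - g x)^2).

Definition QED {V} (G : wgraph V) (S : list V) (phi g h : V -> R) : R :=
  sum2 G S (fun x y => wt G x y * phi x * phi y * (2 * (g y - g x) * (h y - h x))).

Lemma Mass_nonneg {V} (G : wgraph V) L g : 0 <= Mass G L g.
Proof. apply sumL_map_nonneg. intros x _. assert (0 < ms G x) by apply ms_pos. nra. Qed.

Lemma Grad_nonneg {V} (G : wgraph V) L g : 0 <= Grad G L g.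
Proof. apply sum2_nonneg. intros x y _ H. assert (0 <= wt G x y) by (apply wt_nonneg; auto).
  apply Rmult_le_pos; [auto| apply pow2_ge_0]. Qed.

Lemma L1_alg {V} (G : wgraph V) (L S : list V) (chi g : V -> R) K :
  NoDup L -> NoDup S -> (forall y, In y S -> In y L) ->
  (forall x y, adj G x y -> (chi x <> 0 \/ chi y <> 0) -> In x L /\ In y L) ->
  (forall x, In x S -> chi x = 1 /\ forall y, adj G x y -> chi y = 1) ->
  (forall x, sumL (map (fun y => wt G x y * (chi y - chi x)^2) (nbr G x)) <= K * ms G x) ->
  EnerD G L chi g (laplacian G g) <= - Grad G S g + K * Mass G L g.
Proof.
  intros NL NS HSL Hsupp Hone Hlip.
  set (F := fun x y => 2 * (chi x)^2 * g x * (wt G x y * (g y - g x))).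
  assert (E1 : EnerD G L chi g (laplacian G g) = sum2 G L F).
  { unfold EnerD, sum2. apply sumL_map_ext_in. intros x _. unfold F.
    rewrite (sum_lap G g x (2 * chi x ^ 2 * g x)). ring. }
  assert (E2 : sum2 G L F = sum2 G L (fun x y => F y x)).
  { apply sum2_sym; auto. intros x y Ha Hn. apply Hsupp; auto. left. intro Hc. apply Hn. unfold F. rewrite Hc. ring. }
  assert (E3 : sum2 G L F = sum2 G L (fun x y => / 2 * (F x y + F y x))).
  { rewrite sum2_scal, sum2_plus, <- E2. field. }
  set (A := fun x y => - (wt G x y * (chi y * g y - chi x * g x)^2)).
  set (B := fun x y => / 2 * (wt G x y * (g x)^2 * (chi y - chi x)^2)).
  assert (E4 : sum2 G L F <= sum2 G L (fun x y => A x y + (B x y + B y x))).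
  { rewrite E3. apply sum2_le. intros x y Hx Ha. unfold F, A, B. cbv beta. rewrite (wt_sym _ G y x).
    assert (0 <= wt G x y) by (apply wt_nonneg; auto).
    assert (0 <= wt G x y * (g x - g y)^2 * (chi y - chi x)^2).
    { apply Rmult_le_pos; [apply Rmult_le_pos; [auto| apply pow2_ge_0]| apply pow2_ge_0]. }
    match goal with |- ?l <= ?r => assert (l = r - / 2 * (wt G x y * (g x - g y)^2 * (chi y - chi x)^2)) by field end.
    lra. }
  rewrite sum2_plus, sum2_plus in E4.
  assert (E5 : sum2 G L B = sum2 G L (fun x y => B y x)).
  { apply sum2_sym; auto. intros x y Ha Hn. apply Hsupp; auto.
    destruct (Req_dec (chi x) 0) as [Hx|Hx]; [|left; auto].
    destruct (Req_dec (chi y) 0) as [Hy|Hy]; [|right; auto].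
    exfalso. apply Hn. unfold B. rewrite Hx, Hy. ring. }
  rewrite <- E5 in E4.
  assert (E6 : sum2 G L B <= / 2 * (K * Mass G L g)).
  { unfold sum2, B, Mass. rewrite <- sumL_map_scal, <- sumL_map_scal. apply sumL_map_le. intros x Hx.
    rewrite (sumL_map_ext_in _ (fun y => / 2 * (g x)^2 * (wt G x y * (chi y - chi x)^2))) by (intros; ring).
    rewrite sumL_map_scal. specialize (Hlip x).
    assert (0 <= / 2 * (g x)^2) by (apply Rmult_le_pos; [lra| apply pow2_ge_0]). nra. }
  assert (E7 : Grad G S g <= - sum2 G L A).
  { unfold A. rewrite <- (Rmult_1_l (sum2 G L _)). rewrite Ropp_mult_distr_l, <- sum2_scal.
    apply Rle_trans with (sum2 G S (fun x y => -1 * - (wt G x y * (chi y * g y - chi x * g x) ^ 2))).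
    - unfold Grad. right. apply sum2_ext. intros x y Hx Ha. destruct (Hone x Hx) as [H1 H2].
      rewrite H1, (H2 y Ha). ring.
    - apply sum2_sub; auto. intros x y _ Ha. assert (0 <= wt G x y) by (apply wt_nonneg; auto).
      assert (0 <= (chi y * g y - chi x * g x) ^ 2) by apply pow2_ge_0. nra. }
  lra.
Qed.

Lemma L2_alg {V} (G : wgraph V) (S S2 : list V) (phi g : V -> R) K :
  NoDup S -> NoDup S2 -> (forall y, In y S2 -> In y S) ->
  (forall x, 0 <= phi x <= 1) -> (forall x, phi x <> 0 -> In x S) ->
  (forall x, In x S2 -> phi x = 1) -> 0 < K ->
  (forall x, sumL (map (fun y => wt G x y * (phi y - phi x)^2) (nbr G x)) <= K * ms G x) ->
  QED G S phi g (laplacian G g) <= - 2 * Mass G S2 (laplacian G g) + 2 * K * Grad G S g.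
Proof.
  intros NS NS2 HS2 Hr Hsupp Hone HK Hlip.
  set (f := laplacian G g).
  set (P := fun x y => wt G x y * phi x * phi y * (g y - g x) * f x).
  assert (E1 : QED G S phi g f = sum2 G S (fun x y => -2 * P y x + -2 * P x y)).
  { unfold QED. apply sum2_ext. intros x y _ _. unfold P. rewrite (wt_sym _ G y x). ring. }
  rewrite sum2_plus, sum2_scal, sum2_scal in E1.
  rewrite <- (sum2_sym G S P) in E1.
  2: auto.
  2:{ intros x y Ha Hn. split; apply Hsupp; intro Hc; apply Hn; unfold P; rewrite Hc; ring. }
  set (C := fun x y => wt G x y * (phi x * f x * (phi y - phi x)) * (g y - g x)).
  set (Fp := sumL (map (fun x => ms G x * (phi x)^2 * (f x)^2) S)).
  assert (E2 : sum2 G S P = Fp + sum2 G S C).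
  { rewrite (sum2_ext G S P (fun x y => (phi x)^2 * f x * (wt G x y * (g y - g x)) + C x y)).
    2:{ intros. unfold P, C. ring. }
    rewrite sum2_plus. f_equal. unfold sum2, Fp. apply sumL_map_ext_in. intros x _.
    rewrite sumL_map_scal. unfold f. rewrite <- (lap_mul G g x). ring. }
  assert (E3 : - sum2 G S C <= sum2 G S (fun x y => / 2 * (/ K * (phi x * f x)^2 * (wt G x y * (phi y - phi x)^2))
                                           + / 2 * K * (wt G x y * (g y - g x)^2))).
  { rewrite <- (Rmult_1_l (sum2 G S C)). rewrite Ropp_mult_distr_l, <- sum2_scal. apply sum2_le.
    intros x y _ Ha. unfold C. assert (0 <= wt G x y) by (apply wt_nonneg; auto).
    set (a := phi x * f x * (phi y - phi x)). set (b := g y - g x).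
    assert (0 <= wt G x y * (a + K * b)^2 / K).
    { apply Rmult_le_pos; [apply Rmult_le_pos; [auto| apply pow2_ge_0]| left; apply Rinv_0_lt_compat; auto]. }
    match goal with |- ?l <= ?r => assert (r - l = / 2 * (wt G x y * (a + K * b)^2 / K)) end.
    { unfold a, b. field. lra. }
    lra. }
  rewrite sum2_plus in E3.
  rewrite (sum2_scal G S (/ 2 * K) (fun x y => wt G x y * (g y - g x) ^ 2)) in E3.
  assert (E4 : sum2 G S (fun x y => / 2 * (/ K * (phi x * f x) ^ 2 * (wt G x y * (phi y - phi x) ^ 2))) <= / 2 * Fp).
  { unfold sum2, Fp. rewrite <- sumL_map_scal. apply sumL_map_le. intros x _.
    rewrite sumL_map_scal, sumL_map_scal. specialize (Hlip x).
    assert (0 <= / K * (phi x * f x)^2).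
    { apply Rmult_le_pos; [left; apply Rinv_0_lt_compat; auto| apply pow2_ge_0]. }
    assert (/ K * (phi x * f x) ^ 2 * sumL (map (fun y => wt G x y * (phi y - phi x) ^ 2) (nbr G x))
            <= / K * (phi x * f x) ^ 2 * (K * ms G x)) by (apply Rmult_le_compat_l; auto).
    replace (/ K * (phi x * f x) ^ 2 * (K * ms G x)) with (ms G x * phi x ^ 2 * f x ^ 2) in H0 by (field; lra).
    lra. }
  assert (E5 : Mass G S2 f <= Fp).
  { unfold Mass, Fp. rewrite (sumL_map_ext_in (fun x => ms G x * f x ^ 2) (fun x => ms G x * phi x ^ 2 * f x ^ 2)).
    2:{ intros x Hx. rewrite Hone by auto. ring. }
    apply sumL_sub; auto. intros x _. assert (0 < ms G x) by apply ms_pos.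
    apply Rmult_le_pos; [apply Rmult_le_pos; [lra| apply pow2_ge_0]| apply pow2_ge_0]. }
  unfold Grad. fold f. rewrite E1, E2. lra.
Qed.

Lemma QE_le_Grad {V} (G : wgraph V) S phi g :
  (forall x, 0 <= phi x <= 1) -> QE G S phi g <= Grad G S g.
Proof.
  intros Hr. apply sum2_le. intros x y _ Ha. assert (0 <= wt G x y) by (apply wt_nonneg; auto).
  destruct (Hr x), (Hr y). assert (0 <= (g y - g x)^2) by apply pow2_ge_0.
  assert (phi x * phi y <= 1) by nra.
  assert (0 <= phi x * phi y) by nra.
  assert (0 <= wt G x y * (g y - g x)^2) by nra.
  replace (wt G x y * phi x * phi y * (g y - g x) ^ 2) with ((phi x * phi y) * (wt G x y * (g y - g x)^2)) by ring.
  nra.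
Qed.

Lemma QE_nonneg {V} (G : wgraph V) S phi g :
  (forall x, 0 <= phi x <= 1) -> 0 <= QE G S phi g.
Proof.
  intros Hr. apply sum2_nonneg. intros x y _ Ha. assert (0 <= wt G x y) by (apply wt_nonneg; auto).
  destruct (Hr x), (Hr y). assert (0 <= (g y - g x)^2) by apply pow2_ge_0.
  cbv beta. apply Rmult_le_pos; [|exact H4]. apply Rmult_le_pos; [|lra]. apply Rmult_le_pos; lra.
Qed.

Lemma Ener_le_Mass {V} (G : wgraph V) L chi g :
  (forall x, 0 <= chi x <= 1) -> Ener G L chi g <= Mass G L g.
Proof.
  intros Hr. apply sumL_map_le. intros x _. assert (0 < ms G x) by apply ms_pos.
  destruct (Hr x). assert (0 <= g x ^ 2) by apply pow2_ge_0. assert (chi x ^ 2 <= 1) by nra.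
  assert (0 <= ms G x * g x ^ 2) by nra.
  replace (ms G x * chi x ^ 2 * g x ^ 2) with (chi x ^ 2 * (ms G x * g x ^ 2)) by ring. nra.
Qed.

Lemma Mass_le_Ener {V} (G : wgraph V) S L chi g :
  NoDup S -> (forall y, In y S -> In y L) -> (forall x, In x S -> chi x = 1) ->
  Mass G S g <= Ener G L chi g.
Proof.
  intros NS HSL H1. unfold Mass, Ener.
  rewrite (sumL_map_ext_in (fun x => ms G x * g x ^ 2) (fun x => ms G x * chi x ^ 2 * g x ^ 2)).
  2:{ intros x Hx. rewrite H1 by auto. ring. }
  apply sumL_sub; auto. intros x _. assert (0 < ms G x) by apply ms_pos.
  apply Rmult_le_pos; [apply Rmult_le_pos; [lra| apply pow2_ge_0]| apply pow2_ge_0].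
Qed.


Lemma D_val (f : R -> R) (t l l' : R) : is_derive f t l -> l = l' -> is_derive f t l'.
Proof. intros H ->. exact H. Qed.
Lemma D_plus (f g : R -> R) (t df dg : R) : is_derive f t df -> is_derive g t dg ->
  is_derive (fun s => f s + g s) t (df + dg).
Proof. intros. apply (is_derive_plus f g); auto. Qed.
Lemma D_minus (f g : R -> R) (t df dg : R) : is_derive f t df -> is_derive g t dg ->
  is_derive (fun s => f s - g s) t (df - dg).
Proof. intros. apply (is_derive_minus f g); auto. Qed.
Lemma D_mult (f g : R -> R) (t df dg : R) : is_derive f t df -> is_derive g t dg ->
  is_derive (fun s => f s * g s) t (df * g t + f t * dg).
Proof. intros. apply (is_derive_mult f g); auto. intros; apply Rmult_comm. Qed.
Lemma D_const (c t : R) : is_derive (fun _ => c) t 0.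
Proof. apply (is_derive_const c). Qed.
Lemma D_scal (f : R -> R) (c t df : R) : is_derive f t df -> is_derive (fun s => c * f s) t (c * df).
Proof. apply is_derive_scal. Qed.
Lemma D_sq (f : R -> R) (t df : R) : is_derive f t df -> is_derive (fun s => f s ^ 2) t (2 * f t * df).
Proof. intros H. apply (D_val _ _ _ _ (is_derive_pow f 2 t df H)). simpl. ring. Qed.

Lemma C_plus (f g : R -> R) (t : R) : continuous f t -> continuous g t -> continuous (fun s => f s + g s) t.
Proof. intros. apply (continuous_plus f g); auto. Qed.
Lemma C_minus (f g : R -> R) (t : R) : continuous f t -> continuous g t -> continuous (fun s => f s - g s) t.
Proof. intros. apply (continuous_minus f g); auto. Qed.
Lemma C_mult (f g : R -> R) (t : R) : continuous f t -> continuous g t -> continuous (fun s => f s * g s) t.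
Proof. intros. apply (continuous_mult f g); auto. Qed.
Lemma C_const (c t : R) : continuous (fun _ => c) t.
Proof. apply continuous_const. Qed.
Lemma C_sq (f : R -> R) (t : R) : continuous f t -> continuous (fun s => f s ^ 2) t.
Proof. intros H. apply (continuous_ext (fun s => f s * f s)). intros x0. change (f x0 * f x0 = f x0 ^ 2). ring. apply C_mult; auto. Qed.

Lemma D_sumL {A} (F : A -> R -> R) (F' : A -> R) l (t : R) :
  (forall a, In a l -> is_derive (F a) t (F' a)) ->
  is_derive (fun s => sumL (map (fun a => F a s) l)) t (sumL (map F' l)).
Proof.
  induction l as [|a l IH]; intros H; simpl.
  - apply D_const.
  - apply D_plus; [apply H; simpl; auto| apply IH; intros; apply H; simpl; auto].
Qed.

Lemma C_sumL {A} (F : A -> R -> R) l (t : R) :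
  (forall a, In a l -> continuous (F a) t) ->
  continuous (fun s => sumL (map (fun a => F a s) l)) t.
Proof.
  induction l as [|a l IH]; intros H; simpl.
  - apply C_const.
  - apply C_plus; [apply H; simpl; auto| apply IH; intros; apply H; simpl; auto].
Qed.

Fixpoint lapn {V} (G : wgraph V) (u : V -> R -> R) (j : nat) : V -> R -> R :=
  match j with
  | O => u
  | S j => fun x t => laplacian G (fun y => lapn G u j y t) x
  end.

Definition sol {V} (G : wgraph V) (v : V -> R -> R) : Prop :=
  forall x t, t < 0 -> is_derive (v x) t (laplacian G (fun y => v y t) x).

Definition lapt {V} (G : wgraph V) (v : V -> R -> R) : V -> R -> R :=
  fun x t => laplacian G (fun y => v y t) x.

Lemma sol_lap {V} (G : wgraph V) v : sol G v -> sol G (lapt G v).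
Proof.
  intros Hv x t Ht. unfold lapt, laplacian at 1.
  apply (D_sumL (fun y s => wt G x y / ms G x * (v y s - v x s))
                (fun y => wt G x y / ms G x * (laplacian G (fun z => v z t) y - laplacian G (fun z => v z t) x))).
  intros y _. apply D_scal. apply D_minus; apply Hv; auto.
Qed.

Lemma sol_lapn {V} (G : wgraph V) u : ancient G u -> forall j, sol G (lapn G u j).
Proof.
  intros Hu j. induction j as [|j IH].
  - intros x t Ht. apply (proj1 (Hu x)); auto.
  - apply (sol_lap G (lapn G u j)). exact IH.
Qed.

Lemma sol_cont {V} (G : wgraph V) v : sol G v -> forall x t, t < 0 -> continuous (v x) t.
Proof. intros Hv x t Ht. apply (ex_derive_continuous (v x)). eexists. apply Hv; auto. Qed.

Definition Mt {V} (G : wgraph V) L (v : V -> R -> R) (t : R) := Mass G L (fun x => v x t).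
Definition Gt {V} (G : wgraph V) S (v : V -> R -> R) (t : R) := Grad G S (fun x => v x t).

Lemma Mt_cont {V} (G : wgraph V) L v t : sol G v -> t < 0 -> continuous (Mt G L v) t.
Proof.
  intros Hv Ht. unfold Mt, Mass.
  apply (C_sumL (fun x s => ms G x * v x s ^ 2)). intros x _.
  apply C_mult; [apply C_const| apply C_sq; apply (sol_cont G v Hv); auto].
Qed.

Lemma sum2_cont {V} (G : wgraph V) L (h : V -> V -> R -> R) t :
  (forall x y, continuous (h x y) t) -> continuous (fun s => sum2 G L (fun x y => h x y s)) t.
Proof.
  intros H. unfold sum2. apply (C_sumL (fun x s => sumL (map (fun y => h x y s) (nbr G x)))).
  intros x _. apply (C_sumL (fun y s => h x y s)). intros; auto.
Qed.

Lemma sum2_der {V} (G : wgraph V) L (h : V -> V -> R -> R) h' t :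
  (forall x y, is_derive (h x y) t (h' x y)) ->
  is_derive (fun s => sum2 G L (fun x y => h x y s)) t (sum2 G L h').
Proof.
  intros H. unfold sum2. apply (D_sumL (fun x s => sumL (map (fun y => h x y s) (nbr G x)))).
  intros x _. apply (D_sumL (fun y s => h x y s)). intros; auto.
Qed.

Lemma Gt_cont {V} (G : wgraph V) S v t : sol G v -> t < 0 -> continuous (Gt G S v) t.
Proof.
  intros Hv Ht. unfold Gt, Grad.
  apply (sum2_cont G S (fun x y s => wt G x y * (v y s - v x s) ^ 2)). intros x y.
  apply C_mult; [apply C_const| apply C_sq; apply C_minus; apply (sol_cont G v Hv); auto].
Qed.

Lemma Ener_der {V} (G : wgraph V) L chi v t : sol G v -> t < 0 ->
  is_derive (fun s => Ener G L chi (fun x => v x s)) t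
            (EnerD G L chi (fun x => v x t) (laplacian G (fun x => v x t))).
Proof.
  intros Hv Ht. unfold Ener, EnerD.
  apply (D_sumL (fun x s => ms G x * chi x ^ 2 * v x s ^ 2)). intros x _.
  eapply D_val. apply D_scal. apply D_sq. apply Hv; auto. ring.
Qed.

Lemma EnerD_cont {V} (G : wgraph V) L chi v t : sol G v -> t < 0 ->
  continuous (fun s => EnerD G L chi (fun x => v x s) (laplacian G (fun x => v x s))) t.
Proof.
  intros Hv Ht. unfold EnerD.
  apply (C_sumL (fun x s => ms G x * chi x ^ 2 * (2 * v x s * laplacian G (fun x => v x s) x))).
  intros x _. apply C_mult; [apply C_const|]. apply C_mult; [apply C_mult; [apply C_const|]|].
  - apply (sol_cont G v Hv); auto.
  - apply (sol_cont G (lapt G v) (sol_lap G v Hv)); auto.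
Qed.

Lemma QE_der {V} (G : wgraph V) S phi v t : sol G v -> t < 0 ->
  is_derive (fun s => QE G S phi (fun x => v x s)) t
            (QED G S phi (fun x => v x t) (laplacian G (fun x => v x t))).
Proof.
  intros Hv Ht. unfold QE, QED.
  apply (sum2_der G S (fun x y s => wt G x y * phi x * phi y * (v y s - v x s) ^ 2)).
  intros x y. eapply D_val. apply D_scal. apply D_sq. apply D_minus; apply Hv; auto. cbv beta. ring.
Qed.

Lemma QED_cont {V} (G : wgraph V) S phi v t : sol G v -> t < 0 ->
  continuous (fun s => QED G S phi (fun x => v x s) (laplacian G (fun x => v x s))) t.
Proof.
  intros Hv Ht. unfold QED.
  apply (sum2_cont G S (fun x y s => wt G x y * phi x * phi y *
      (2 * (v y s - v x s) * (laplacian G (fun x => v x s) y - laplacian G (fun x => v x s) x)))).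
  intros x y. apply C_mult; [apply C_const|]. apply C_mult; [apply C_mult; [apply C_const|]|].
  - apply C_minus; apply (sol_cont G v Hv); auto.
  - apply C_minus; apply (sol_cont G (lapt G v) (sol_lap G v Hv)); auto.
Qed.


Lemma exRI (g : R -> R) a b : a <= b -> (forall t, a <= t <= b -> continuous g t) -> ex_RInt g a b.
Proof.
  intros Hab H. apply (@ex_RInt_continuous R_CompleteNormedModule g a b). rewrite Rmin_left, Rmax_right by lra. auto.
Qed.

Lemma RInt_scalR (g : R -> R) a b c : ex_RInt g a b -> RInt (fun x => c * g x) a b = c * RInt g a b.
Proof. intros H. apply (@RInt_scal R_CompleteNormedModule g a b c H). Qed.

Lemma int_ineq (E E' g h : R -> R) a b : a <= b ->
  (forall t, a <= t <= b -> is_derive E t (E' t)) ->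
  (forall t, a <= t <= b -> continuous E' t) ->
  (forall t, a <= t <= b -> continuous g t) ->
  (forall t, a <= t <= b -> continuous h t) ->
  (forall t, a <= t <= b -> g t <= - E' t + h t) ->
  RInt g a b <= E a - E b + RInt h a b.
Proof.
  intros Hab HD HC Hg Hh Hle.
  assert (HE : is_RInt E' a b (minus (E b) (E a))).
  { apply (@is_RInt_derive R_CompleteNormedModule E E' a b); rewrite Rmin_left, Rmax_right by lra; auto. }
  assert (Hh' : is_RInt h a b (RInt h a b)) by (apply (@RInt_correct R_CompleteNormedModule); apply exRI; auto).
  assert (Hs := @is_RInt_plus R_CompleteNormedModule _ _ a b _ _ (@is_RInt_opp R_CompleteNormedModule _ a b _ HE) Hh').
  assert (Hs' : is_RInt (fun t => - E' t + h t) a b (- (E b - E a) + RInt h a b)) by exact Hs.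
  assert (RInt g a b <= RInt (fun t => - E' t + h t) a b).
  { apply RInt_le; auto. apply exRI; auto. eexists; exact Hs'. intros; apply Hle; lra. }
  rewrite (@is_RInt_unique R_CompleteNormedModule _ _ _ _ Hs') in H. lra.
Qed.

Lemma pick (g : R -> R) a l : 0 < l -> (forall t, a <= t <= a + l -> continuous g t) ->
  exists t, a <= t <= a + l /\ g t * l <= RInt g a (a + l).
Proof.
  intros Hl Hc.
  destruct (continuity_ab_min g a (a + l)) as [mx [Hmx Hr]]; [lra| |].
  { intros c Hc'. apply continuity_pt_filterlim. apply Hc; auto. }
  exists mx. split; auto.
  assert (RInt (fun _ => g mx) a (a + l) <= RInt g a (a + l)).
  { apply RInt_le; [lra| apply (@ex_RInt_const R_CompleteNormedModule)| apply exRI; [lra|auto]|]. intros; apply Hmx; lra. }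
  rewrite (@RInt_const R_CompleteNormedModule) in H. change (scal (a + l - a) (g mx)) with ((a + l - a) * g mx) in H. nra.
Qed.

Lemma RInt_left (g : R -> R) a a' b : a <= a' <= b ->
  (forall t, a <= t <= b -> continuous g t) -> (forall t, a <= t <= b -> 0 <= g t) ->
  RInt g a' b <= RInt g a b.
Proof.
  intros Ha Hc Hn. rewrite <- (@RInt_Chasles R_CompleteNormedModule g a a' b).
  - change (plus ?x ?y) with (x + y). assert (0 <= RInt g a a').
    { apply RInt_ge_0; [lra| apply exRI; [lra| intros; apply Hc; lra]| intros; apply Hn; lra]. }
    lra.
  - apply exRI; [lra| intros; apply Hc; lra].
  - apply exRI; [lra| intros; apply Hc; lra].
Qed.

Lemma RInt_right (g : R -> R) a b' b : a <= b' <= b ->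
  (forall t, a <= t <= b -> continuous g t) -> (forall t, a <= t <= b -> 0 <= g t) ->
  RInt g a b' <= RInt g a b.
Proof.
  intros Ha Hc Hn. rewrite <- (@RInt_Chasles R_CompleteNormedModule g a b' b).
  - change (plus ?x ?y) with (x + y). assert (0 <= RInt g b' b).
    { apply RInt_ge_0; [lra| apply exRI; [lra| intros; apply Hc; lra]| intros; apply Hn; lra]. }
    lra.
  - apply exRI; [lra| intros; apply Hc; lra].
  - apply exRI; [lra| intros; apply Hc; lra].
Qed.

Definition L1hyp {V} (G : wgraph V) L S (chi : V -> R) K : Prop :=
  NoDup L /\ NoDup S /\ (forall y, In y S -> In y L) /\
  (forall x y, adj G x y -> (chi x <> 0 \/ chi y <> 0) -> In x L /\ In y L) /\
  (forall x, In x S -> chi x = 1 /\ forall y, adj G x y -> chi y = 1) /\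
  (forall x, 0 <= chi x <= 1) /\
  (forall x, sumL (map (fun y => wt G x y * (chi y - chi x)^2) (nbr G x)) <= K * ms G x).

Definition L2hyp {V} (G : wgraph V) S S2 (phi : V -> R) K : Prop :=
  NoDup S /\ NoDup S2 /\ (forall y, In y S2 -> In y S) /\
  (forall x, 0 <= phi x <= 1) /\ (forall x, phi x <> 0 -> In x S) /\
  (forall x, In x S2 -> phi x = 1) /\
  (forall x, sumL (map (fun y => wt G x y * (phi y - phi x)^2) (nbr G x)) <= K * ms G x).

Lemma Ener_nonneg {V} (G : wgraph V) L chi g : 0 <= Ener G L chi g.
Proof.
  apply sumL_map_nonneg. intros x _. assert (0 < ms G x) by apply ms_pos.
  apply Rmult_le_pos; [apply Rmult_le_pos; [lra| apply pow2_ge_0]| apply pow2_ge_0].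
Qed.

Lemma pick_M {V} (G : wgraph V) v L K l a0 b B : sol G v -> 0 < K -> K * l = 1 -> 0 < l ->
  a0 + l <= b -> b < 0 -> RInt (Mt G L v) a0 b <= B ->
  exists a, a0 <= a <= a0 + l /\ Mt G L v a <= K * B.
Proof.
  intros Hv HK HKl Hl Hb Hb0 HB.
  destruct (pick (Mt G L v) a0 l) as [a [Ha Hg]]; auto.
  { intros; apply Mt_cont; auto; lra. }
  exists a. split; auto.
  assert (RInt (Mt G L v) a0 (a0 + l) <= RInt (Mt G L v) a0 b).
  { apply RInt_right; [lra| intros; apply Mt_cont; auto; lra| intros; apply Mass_nonneg]. }
  assert (Mt G L v a * l <= B) by lra.
  replace (Mt G L v a) with (Mt G L v a * l * K) by (replace (Mt G L v a * l * K) with (Mt G L v a * (K * l)) by ring; rewrite HKl; ring).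
  apply Rmult_le_compat_r with (r := K) in H0; lra.
Qed.

Lemma L1_int {V} (G : wgraph V) v L S chi K a b : sol G v -> L1hyp G L S chi K -> a <= b -> b < 0 ->
  RInt (Gt G S v) a b <= Ener G L chi (fun x => v x a) - Ener G L chi (fun x => v x b) + K * RInt (Mt G L v) a b.
Proof.
  intros Hv [NL [NS [HSL [Hsupp [Hone [Hr Hlip]]]]]] Hab Hb.
  rewrite <- RInt_scalR by (apply exRI; auto; intros; apply Mt_cont; auto; lra).
  apply (int_ineq (fun s => Ener G L chi (fun x => v x s))
                  (fun s => EnerD G L chi (fun x => v x s) (laplacian G (fun x => v x s)))); auto.
  - intros; apply Ener_der; auto; lra.
  - intros; apply EnerD_cont; auto; lra.
  - intros; apply Gt_cont; auto; lra.
  - intros; apply C_mult; [apply C_const| apply Mt_cont; auto; lra].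
  - intros t Ht. unfold Gt, Mt.
    assert (H := L1_alg G L S chi (fun x => v x t) K NL NS HSL Hsupp Hone Hlip). lra.
Qed.

Lemma final_step {V} (G : wgraph V) v L S chi K l a0 b B : sol G v -> L1hyp G L S chi K ->
  0 < K -> K * l = 1 -> 0 < l -> a0 + l <= b -> b < 0 -> RInt (Mt G L v) a0 b <= B ->
  Mt G S v b <= 2 * K * B.
Proof.
  intros Hv H1 HK HKl Hl Hb Hb0 HB.
  destruct (pick_M G v L K l a0 b B) as [a [Ha HMa]]; auto.
  assert (HI := L1_int G v L S chi K a b Hv H1 ltac:(lra) Hb0).
  assert (0 <= RInt (Gt G S v) a b).
  { apply RInt_ge_0; [lra| apply exRI; [lra| intros; apply Gt_cont; auto; lra]| intros; apply Grad_nonneg]. }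
  assert (RInt (Mt G L v) a b <= B).
  { eapply Rle_trans; [|exact HB]. apply RInt_left; [lra| intros; apply Mt_cont; auto; lra| intros; apply Mass_nonneg]. }
  destruct H1 as [NL [NS [HSL [Hsupp [Hone [Hr Hlip]]]]]].
  assert (Ener G L chi (fun x => v x a) <= Mt G L v a) by (apply Ener_le_Mass; auto).
  assert (Mt G S v b <= Ener G L chi (fun x => v x b)).
  { apply Mass_le_Ener; auto. intros x Hx; apply Hone; auto. }
  assert (K * RInt (Mt G L v) a b <= K * B) by (apply Rmult_le_compat_l; lra).
  lra.
Qed.

Lemma step {V} (G : wgraph V) v L S S2 chi phi K l a0 b B : sol G v ->
  L1hyp G L S chi K -> L2hyp G S S2 phi K ->
  0 < K -> K * l = 1 -> 0 < l -> a0 + 2 * l <= b -> b < 0 -> RInt (Mt G L v) a0 b <= B ->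
  RInt (Mt G S2 (lapt G v)) (a0 + 2 * l) b <= 3 * K^2 * B.
Proof.
  intros Hv H1 H2 HK HKl Hl Hb Hb0 HB.
  destruct (pick_M G v L K l a0 b B) as [a1 [Ha1 HMa1]]; auto; [lra|].
  assert (HI := L1_int G v L S chi K a1 b Hv H1 ltac:(lra) Hb0).
  assert (RInt (Mt G L v) a1 b <= B).
  { eapply Rle_trans; [|exact HB]. apply RInt_left; [lra| intros; apply Mt_cont; auto; lra| intros; apply Mass_nonneg]. }
  destruct H1 as [NL [NS [HSL [Hsupp [Hone [Hr Hlip]]]]]].
  assert (Ener G L chi (fun x => v x a1) <= Mt G L v a1) by (apply Ener_le_Mass; auto).
  assert (0 <= Ener G L chi (fun x => v x b)) by apply Ener_nonneg.
  assert (K * RInt (Mt G L v) a1 b <= K * B) by (apply Rmult_le_compat_l; lra).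
  assert (HG : RInt (Gt G S v) a1 b <= 2 * K * B) by lra.
  destruct (pick (Gt G S v) a1 l) as [a2 [Ha2 Hg2]]; auto.
  { intros; apply Gt_cont; auto; lra. }
  assert (RInt (Gt G S v) a1 (a1 + l) <= RInt (Gt G S v) a1 b).
  { apply RInt_right; [lra| intros; apply Gt_cont; auto; lra| intros; apply Grad_nonneg]. }
  assert (HGa2 : Gt G S v a2 <= 2 * K^2 * B).
  { assert (Hq : Gt G S v a2 * l <= 2 * K * B) by lra.
    replace (Gt G S v a2) with (Gt G S v a2 * l * K) by (replace (Gt G S v a2 * l * K) with (Gt G S v a2 * (K * l)) by ring; rewrite HKl; ring).
    apply Rmult_le_compat_r with (r := K) in Hq; lra. }
  destruct H2 as [NS' [NS2 [HS2 [Hr2 [Hsupp2 [Hone2 Hlip2]]]]]].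
  assert (HI2 : RInt (fun s => 2 * Mt G S2 (lapt G v) s) a2 b <=
                QE G S phi (fun x => v x a2) - QE G S phi (fun x => v x b) + RInt (fun s => 2 * K * Gt G S v s) a2 b).
  { apply (int_ineq (fun s => QE G S phi (fun x => v x s))
                    (fun s => QED G S phi (fun x => v x s) (laplacian G (fun x => v x s)))); try lra.
    - intros; apply QE_der; auto; lra.
    - intros; apply QED_cont; auto; lra.
    - intros; apply C_mult; [apply C_const| apply Mt_cont; [apply sol_lap; auto| lra]].
    - intros; apply C_mult; [apply C_const| apply Gt_cont; auto; lra].
    - intros t Ht. unfold Gt, Mt.
      assert (Hal := L2_alg G S S2 phi (fun x => v x t) K NS NS2 HS2 Hr2 Hsupp2 Hone2 HK Hlip2).
      unfold lapt. change (Mass G S2 (fun x => laplacian G (fun y => v y t) x)) with (Mass G S2 (laplacian G (fun x => v x t))). lra. }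
  rewrite RInt_scalR in HI2 by (apply exRI; [lra| intros; apply Mt_cont; [apply sol_lap; auto| lra]]).
  rewrite RInt_scalR in HI2 by (apply exRI; [lra| intros; apply Gt_cont; auto; lra]).
  assert (QE G S phi (fun x => v x a2) <= Gt G S v a2) by (apply QE_le_Grad; auto).
  assert (0 <= QE G S phi (fun x => v x b)) by (apply QE_nonneg; auto).
  assert (RInt (Gt G S v) a2 b <= RInt (Gt G S v) a1 b).
  { apply RInt_left; [lra| intros; apply Gt_cont; auto; lra| intros; apply Grad_nonneg]. }
  assert (RInt (Mt G S2 (lapt G v)) (a0 + 2 * l) b <= RInt (Mt G S2 (lapt G v)) a2 b).
  { apply RInt_left; [lra| intros; apply Mt_cont; [apply sol_lap; auto| lra]| intros; apply Mass_nonneg]. }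
  assert (2 * K * RInt (Gt G S v) a2 b <= 2 * K * (2 * K * B)).
  { apply Rmult_le_compat_l; lra. }
  nra.
Qed.


Lemma adj_near {V} (G : wgraph V) rho s o x y : pseudometric rho ->
  (forall x y, adj G x y -> rho x y <= s) -> adj G x y -> rho y o <= s + rho x o.
Proof.
  intros [Hn [H0 [Hs Ht]]] Hj Ha. specialize (Ht y x o). rewrite (Hs y x) in Ht. specialize (Hj x y Ha). lra.
Qed.

Lemma L1_ball {V} (G : wgraph V) rho s r o P L S : intrinsic G rho ->
  (forall x y, adj G x y -> rho x y <= s) -> 0 <= s -> 0 < r ->
  ball_enum rho o P L -> ball_enum rho o (P - r - 2 * s) S ->
  L1hyp G L S (cut rho o (P - r - s) r) (/ r^2).
Proof.
  intros Hi Hj Hs Hr [NL HL] [NS HS]. assert (Hp := proj1 Hi).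
  assert (Hsym : forall x y, adj G x y -> adj G y x) by (intros; apply (@nbr_sym _ G); auto).
  unfold L1hyp. refine (conj NL (conj NS (conj _ (conj _ (conj _ (conj _ _)))))).
  - intros y Hy. apply HL. apply HS in Hy. lra.
  - intros x y H0 H. split.
    + destruct H as [H|H].
      * apply cut_nz in H; auto. apply HL. lra.
      * apply cut_nz in H; auto. apply HL. assert (T := adj_near G rho s o y x Hp Hj (Hsym _ _ H0)). lra.
    + destruct H as [H|H].
      * apply cut_nz in H; auto. apply HL. assert (T := adj_near G rho s o x y Hp Hj H0). lra.
      * apply cut_nz in H; auto. apply HL. lra.
  - intros x H. split.
    + apply cut_one; auto. apply HS in H. lra.
    + intros y Ha. apply cut_one; auto. apply HS in H. assert (T := adj_near G rho s o x y Hp Hj Ha). lra.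
  - intros; apply cut_range.
  - intros x. apply (lip_sum G rho); auto. left. apply Rinv_0_lt_compat. nra.
    intros x0 y _. apply cut_lip; auto.
Qed.

Lemma L2_ball {V} (G : wgraph V) rho s r o P S S2 : intrinsic G rho ->
  0 <= s -> 0 < r ->
  ball_enum rho o (P - r - 2 * s) S -> ball_enum rho o (P - 2 * r - 2 * s) S2 ->
  L2hyp G S S2 (cut rho o (P - 2 * r - 2 * s) r) (/ r^2).
Proof.
  intros Hi Hs Hr [NS HS] [NS2 HS2]. assert (Hp := proj1 Hi).
  unfold L2hyp. refine (conj NS (conj NS2 (conj _ (conj _ (conj _ (conj _ _)))))).
  - intros y Hy. apply HS. apply HS2 in Hy. lra.
  - intros; apply cut_range.
  - intros x H. apply cut_nz in H; auto. apply HS. lra.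
  - intros x H. apply cut_one; auto. apply HS2 in H. lra.
  - intros x. apply (lip_sum G rho); auto. left. apply Rinv_0_lt_compat. nra.
    intros x0 y _. apply cut_lip; auto.
Qed.

Lemma chain {V} (G : wgraph V) rho u o s r T t0 B0 P0 q :
  intrinsic G rho -> finite_balls rho -> (forall x y, adj G x y -> rho x y <= s) -> 0 <= s -> 0 < r ->
  ancient G u -> t0 < 0 -> - T + (2 * INR q + 1) * r^2 <= t0 ->
  (forall L, ball_enum rho o P0 L -> RInt (Mt G L u) (- T) t0 <= B0) ->
  forall j, (j <= q)%nat -> forall L, ball_enum rho o (P0 - INR j * (2 * r + 2 * s)) L ->
  RInt (Mt G L (lapn G u j)) (- T + 2 * INR j * r^2) t0 <= (3 * (/ r^2)^2)^j * B0.
Proof.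
  intros Hi Hf Hj Hs Hr Hu Ht0 HT HB0 j. induction j as [|j IH]; intros Hjq L HL.
  - change (INR 0) with 0 in *. rewrite pow_O. replace (- T + 2 * 0 * r ^ 2) with (- T) by ring. rewrite Rmult_1_l.
    apply HB0. replace (P0 - 0 * (2 * r + 2 * s)) with P0 in HL by ring. exact HL.
  - rewrite S_INR in *.
    set (P := P0 - INR j * (2 * r + 2 * s)).
    destruct (Hf o P) as [Lj HLj].
    destruct (Hf o (P - r - 2 * s)) as [S HS].
    assert (HL' : ball_enum rho o (P - 2 * r - 2 * s) L).
    { replace (P - 2 * r - 2 * s) with (P0 - (INR j + 1) * (2 * r + 2 * s)) by (unfold P; ring). exact HL. }
    assert (IH' := IH ltac:(lia) Lj HLj).
    assert (Hjq2 : INR j + 1 <= INR q) by (rewrite <- S_INR; apply le_INR; lia).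
    assert (Hr2 : 0 < r^2) by nra.
    assert (HK : 0 < / r^2) by (apply Rinv_0_lt_compat; lra).
    assert (Hst := step G (lapn G u j) Lj S L (cut rho o (P - r - s) r) (cut rho o (P - 2 * r - 2 * s) r)
                  (/ r^2) (r^2) (- T + 2 * INR j * r ^ 2) t0 ((3 * (/ r ^ 2) ^ 2) ^ j * B0)
                  (sol_lapn G u Hu j)
                  (L1_ball G rho s r o P Lj S Hi Hj Hs Hr HLj HS)
                  (L2_ball G rho s r o P S L Hi Hs Hr HS HL')
                  HK ltac:(field; lra) Hr2 ltac:(nra) Ht0 IH').
    replace (- T + 2 * (INR j + 1) * r ^ 2) with (- T + 2 * INR j * r ^ 2 + 2 * r ^ 2) by ring.
    change ((3 * (/ r^2)^2)^(Datatypes.S j)) with ((3 * (/ r^2)^2) * (3 * (/ r^2)^2)^j). eapply Rle_trans; [exact Hst|]. right. ring.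
Qed.


Lemma Rpower_pos' x y : 0 < Rpower x y.
Proof. unfold Rpower. apply exp_pos. Qed.

Lemma asym (q : nat) k alpha Cu Cg d1 N : 0 < k -> 4 * INR q > 2 * k + alpha + 2 -> 0 <= d1 -> 0 < N ->
  exists C, 0 <= C /\ forall R, 1 <= R ->
  2 * (/ (R / N)^2) * (3 * (/ (R / N)^2)^2)^q *
    (R^2 * ((Cu * Rpower (1 + (R + d1)) k)^2 * (Rabs Cg * Rpower (1 + R) alpha))) <= C / (1 + R).
Proof.
  intros Hk Hq Hd HN.
  set (kap := 4 * N^2).
  set (D := Rpower (1 + d1) k).
  exists (2 * kap * (3 * kap^2)^q * (Cu^2 * D^2 * Rabs Cg)).
  assert (Hkap : 0 < kap) by (unfold kap; nra).
  assert (HD : 0 < D) by apply Rpower_pos'.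
  split.
  { apply Rmult_le_pos; [apply Rmult_le_pos; [lra| apply pow_le; nra]|].
    apply Rmult_le_pos; [apply Rmult_le_pos; [apply pow2_ge_0| apply pow2_ge_0]| apply Rabs_pos]. }
  intros R HR. set (X := 1 + R).
  assert (HX : 2 <= X) by (unfold X; lra).
  assert (HX2 : 0 < X^2) by nra.
  set (K := / (R / N)^2).
  assert (HK : 0 < K) by (unfold K; apply Rinv_0_lt_compat; apply pow_lt; apply Rdiv_lt_0_compat; lra).
  assert (HKle : K <= kap / X^2).
  { unfold K, kap, X. replace (/ (R / N)^2) with (N^2 / R^2) by (field; lra).
    apply Rmult_le_reg_r with (r := R^2 * (1 + R)^2); [nra|].
    replace (N ^ 2 / R ^ 2 * (R ^ 2 * (1 + R) ^ 2)) with (N^2 * (1 + R)^2) by (field; lra).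
    replace (4 * N ^ 2 / (1 + R) ^ 2 * (R ^ 2 * (1 + R) ^ 2)) with (4 * N^2 * R^2) by (field; nra).
    assert ((1 + R)^2 <= 4 * R^2) by nra. nra. }
  assert (HF : 2 * K * (3 * K^2)^q <= 2 * (kap / X^2) * (3 * (kap / X^2)^2)^q).
  { apply Rmult_le_compat; [lra| apply pow_le; nra| lra| apply pow_incr; split; [nra|]].
    apply Rmult_le_compat_l; [lra|]. apply pow_incr; split; lra. }
  assert (HFe : 2 * (kap / X^2) * (3 * (kap / X^2)^2)^q * (X^2 * X^(4 * q)) = 2 * kap * (3 * kap^2)^q).
  { rewrite pow_mult. replace (X^4) with ((X^2)^2) by ring.
    replace (2 * (kap / X ^ 2) * (3 * (kap / X ^ 2) ^ 2) ^ q * (X ^ 2 * ((X ^ 2) ^ 2) ^ q))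
      with (2 * kap * ((3 * (kap / X ^ 2) ^ 2) ^ q * ((X ^ 2) ^ 2) ^ q)) by (field; lra).
    rewrite <- Rpow_mult_distr. f_equal. f_equal. field. lra. }
  assert (HP1 : Rpower (1 + (R + d1)) k <= D * Rpower X k).
  { unfold D. rewrite Rpower_mult_distr by lra. apply Rle_Rpower_l; [lra|]. unfold X. nra. }
  assert (HP2 : (Cu * Rpower (1 + (R + d1)) k)^2 <= Cu^2 * D^2 * (Rpower X k)^2).
  { assert (0 < Rpower (1 + (R + d1)) k) by apply Rpower_pos'.
    replace ((Cu * Rpower (1 + (R + d1)) k)^2) with (Cu^2 * (Rpower (1 + (R + d1)) k)^2) by ring.
    replace (Cu ^ 2 * D ^ 2 * Rpower X k ^ 2) with (Cu^2 * (D * Rpower X k)^2) by ring.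
    apply Rmult_le_compat_l; [apply pow2_ge_0|]. apply pow_incr. lra. }
  set (A := Rpower X (2 * k + alpha - INR (4 * q))).
  assert (HA : (Rpower X k)^2 * Rpower X alpha = A * X^(4 * q)).
  { unfold A. rewrite <- (Rpower_pow (4 * q) X) by lra. rewrite <- Rpower_plus.
    replace (2 * k + alpha - INR (4 * q) + INR (4 * q)) with (k + k + alpha) by ring.
    rewrite Rpower_plus, Rpower_plus. ring. }
  assert (HA2 : A <= / X).
  { unfold A. rewrite <- (Rpower_1 X) at 2 by lra. rewrite <- Rpower_Ropp.
    apply Rle_Rpower; [lra|]. rewrite mult_INR. simpl (INR 4). lra. }
  assert (HA0 : 0 < A) by apply Rpower_pos'.
  assert (HRX : R^2 <= X^2) by (unfold X; nra).
  assert (Hc0 : 0 <= Rabs Cg * Rpower (1 + R) alpha).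
  { apply Rmult_le_pos; [apply Rabs_pos| left; apply Rpower_pos']. }
  assert (HX4 : 0 < X^(4 * q)) by (apply pow_lt; lra).
  fold X.
  set (F := 2 * K * (3 * K ^ 2) ^ q). set (F' := 2 * (kap / X ^ 2) * (3 * (kap / X ^ 2) ^ 2) ^ q).
  assert (HF0 : 0 <= F) by (unfold F; apply Rmult_le_pos; [lra| apply pow_le; nra]).
  set (W := Cu ^ 2 * D ^ 2 * Rabs Cg).
  assert (HW : 0 <= W) by (unfold W; apply Rmult_le_pos; [apply Rmult_le_pos; apply pow2_ge_0| apply Rabs_pos]).
  apply Rle_trans with (F' * (X^2 * (Cu ^ 2 * D ^ 2 * Rpower X k ^ 2 * (Rabs Cg * Rpower X alpha)))).
  { apply Rmult_le_compat; auto.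
    - apply Rmult_le_pos; [nra|]. apply Rmult_le_pos; [apply pow2_ge_0| auto].
    - apply Rmult_le_compat; [nra| apply Rmult_le_pos; [apply pow2_ge_0| auto]| auto|].
      apply Rmult_le_compat; [apply pow2_ge_0| auto| auto| right; reflexivity]. }
  replace (F' * (X ^ 2 * (Cu ^ 2 * D ^ 2 * Rpower X k ^ 2 * (Rabs Cg * Rpower X alpha))))
    with (F' * (X ^ 2 * X ^ (4 * q)) * W * A).
  2:{ unfold W. rewrite <- (Rmult_1_l (Rpower X alpha)). 
      replace (Cu ^ 2 * D ^ 2 * Rpower X k ^ 2 * (Rabs Cg * (1 * Rpower X alpha)))
        with (Cu ^ 2 * D ^ 2 * Rabs Cg * (Rpower X k ^ 2 * Rpower X alpha)) by ring.
      rewrite HA. ring. }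
  unfold F'. rewrite HFe. unfold Rdiv.
  apply Rmult_le_compat_l; [|exact HA2].
  apply Rmult_le_pos; [apply Rmult_le_pos; [lra| apply pow_le; nra]| exact HW].
Qed.


Lemma base_bound {V} (G : wgraph V) rho u o x1 Cu k Cg alpha R t0 :
  pseudometric rho ->
  (forall Rr l, 0 < Rr -> ball_enum rho o Rr l -> mass G l <= Cg * Rpower (1 + Rr) alpha) ->
  (forall Rr, 0 < Rr -> forall y t, rho y x1 <= Rr -> - Rr^2 <= t <= 0 -> Rabs (u y t) <= Cu * Rpower (1 + Rr) k) ->
  ancient G u -> 0 < R -> t0 < 0 -> - R^2 <= t0 ->
  forall L, ball_enum rho o R L ->
  RInt (Mt G L u) (- R^2) t0 <= R^2 * ((Cu * Rpower (1 + (R + rho o x1)) k)^2 * (Rabs Cg * Rpower (1 + R) alpha)).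
Proof.
  intros Hp Hg HP Hu HR Ht0 HT L HL.
  set (P := Cu * Rpower (1 + (R + rho o x1)) k).
  set (c := P^2 * (Rabs Cg * Rpower (1 + R) alpha)).
  destruct Hp as [Hn [H0 [Hs Ht]]].
  assert (Hd : 0 <= rho o x1) by apply Hn.
  assert (Hpt : forall t, - R^2 <= t <= t0 -> Mt G L u t <= c).
  { intros t Ht'. unfold Mt, Mass, c.
    apply Rle_trans with (sumL (map (fun x => P^2 * ms G x) L)).
    - apply sumL_map_le. intros x Hx. apply HL in Hx.
      assert (Hb : Rabs (u x t) <= P).
      { apply HP; [lra| |nra]. specialize (Ht x o x1). lra. }
      assert (0 < ms G x) by apply ms_pos.
      assert (u x t ^ 2 <= P^2).
      { rewrite <- (pow2_abs (u x t)). assert (0 <= Rabs (u x t)) by apply Rabs_pos. nra. }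
      nra.
    - rewrite sumL_map_scal. apply Rmult_le_compat_l; [apply pow2_ge_0|].
      eapply Rle_trans; [apply (Hg R L HR HL)|]. apply Rmult_le_compat_r; [left; apply Rpower_pos'| apply Rle_abs]. }
  assert (Hc : 0 <= c).
  { unfold c. apply Rmult_le_pos; [apply pow2_ge_0|]. apply Rmult_le_pos; [apply Rabs_pos| left; apply Rpower_pos']. }
  apply Rle_trans with (RInt (fun _ => c) (- R^2) t0).
  - apply RInt_le; auto.
    + apply exRI; auto. intros; apply Mt_cont; [apply (sol_lapn G u Hu 0)| lra].
    + apply (@ex_RInt_const R_CompleteNormedModule).
    + intros; apply Hpt; lra.
  - rewrite (@RInt_const R_CompleteNormedModule). change (scal (t0 - - R ^ 2) c) with ((t0 - - R ^ 2) * c).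
    fold P. fold c. nra.
Qed.

Lemma lapq_zero {V} (G : wgraph V) rho alpha k u q :
  intrinsic G rho -> finite_balls rho -> finite_jump G rho ->
  poly_growth_with G rho alpha -> 0 < k -> in_Pk G rho k u ->
  4 * INR q > 2 * k + alpha + 2 ->
  forall x t, t < 0 -> lapn G u q x t = 0.
Proof.
  intros Hi Hf [s0 Hs0] [o [Cg Hg]] Hk [Hu [x1 [Cu HCu]]] Hq xs t0 Ht0.
  assert (Hp := proj1 Hi). destruct Hp as [Hn [H0 [Hsy Htr]]].
  set (s := Rabs s0).
  assert (Hj : forall x y, adj G x y -> rho x y <= s) by (intros; unfold s; eapply Rle_trans; [apply Hs0; auto| apply Rle_abs]).
  assert (Hs : 0 <= s) by apply Rabs_pos.
  set (v := lapn G u q xs t0).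
  destruct (Req_dec v 0) as [Hv|Hv]; auto. exfalso.
  set (cs := ms G xs * v^2).
  assert (Hcs : 0 < cs) by (unfold cs; assert (0 < ms G xs) by apply ms_pos; assert (0 < v^2) by (apply pow2_gt_0; auto); nra).
  set (N := 2 * INR q + 2).
  assert (HN : 2 <= N) by (unfold N; assert (0 <= INR q) by apply pos_INR; lra).
  destruct (asym q k alpha Cu Cg (rho o x1) N Hk Hq (Hn o x1) ltac:(lra)) as [C [HC0 HC]].
  set (ds := rho xs o).
  set (R := 1 + (- 2 * t0) + N * (ds + N * s) + C / cs).
  assert (Hds : 0 <= ds) by apply Hn.
  assert (HCc : 0 <= C / cs) by (apply Rdiv_le_0_compat; lra).
  assert (HNs0 : 0 <= N * (ds + N * s)) by (apply Rmult_le_pos; nra).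
  assert (HR1 : 1 <= R) by (unfold R; lra).
  set (r := R / N).
  assert (Hr : 0 < r) by (unfold r; apply Rdiv_lt_0_compat; lra).
  assert (HR2 : R >= - 2 * t0) by (unfold R; lra).
  assert (HR3 : R^2 >= - 2 * t0) by nra.
  assert (HRT : - R^2 + (2 * INR q + 1) * r^2 <= t0).
  { unfold r.
    assert ((2 * INR q + 1) * (R / N) ^ 2 <= R^2 / 2).
    { replace ((2 * INR q + 1) * (R / N) ^ 2) with ((2 * INR q + 1) / N^2 * R^2) by (field; lra).
      replace (R^2 / 2) with (/ 2 * R^2) by field. apply Rmult_le_compat_r; [nra|].
      apply Rmult_le_reg_r with (r := N^2); [nra|]. unfold Rdiv. rewrite Rmult_assoc, Rinv_l by nra.
      unfold N. nra. }
    lra. }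
  assert (HB0 := base_bound G rho u o x1 Cu k Cg alpha R t0 (proj1 Hi) (fun Rr l H1 H2 => Hg Rr l H1 H2) HCu Hu
                   ltac:(lra) Ht0 ltac:(lra)).
  assert (Hch := chain G rho u o s r (R^2) t0 _ R q Hi Hf Hj Hs Hr Hu Ht0 HRT HB0 q (le_n q)).
  set (Pq := R - INR q * (2 * r + 2 * s)).
  destruct (Hf o Pq) as [Lq HLq].
  destruct (Hf o (Pq - r - 2 * s)) as [Sf HSf].
  assert (Hr2 : 0 < r^2) by nra.
  assert (HK : 0 < / r^2) by (apply Rinv_0_lt_compat; lra).
  assert (Hfin := final_step G (lapn G u q) Lq Sf (cut rho o (Pq - r - s) r) (/ r^2) (r^2)
                    (- R ^ 2 + 2 * INR q * r ^ 2) t0 _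
                    (sol_lapn G u Hu q) (L1_ball G rho s r o Pq Lq Sf Hi Hj Hs Hr HLq HSf)
                    HK ltac:(field; lra) Hr2 ltac:(nra) Ht0 (Hch Lq HLq)).
  assert (Hin : In xs Sf).
  { apply HSf. fold ds. unfold Pq, r.
    assert (HqN : INR q * (2 * (R / N) + 2 * s) + R / N + 2 * s = (2 * INR q + 1) / N * R + N * s).
    { unfold N. field. assert (0 <= INR q) by apply pos_INR. lra. }
    assert ((2 * INR q + 1) / N * R = R - R / N) by (unfold N; field; assert (0 <= INR q) by apply pos_INR; lra).
    assert (N * (ds + N * s) <= R) by (unfold R; nra).
    assert (ds + N * s <= R / N).
    { apply Rmult_le_reg_l with (r := N); [lra|]. replace (N * (R / N)) with R by (field; lra). lra. }
    assert (s <= N * s) by nra.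
    lra. }
  assert (Hcs' : cs <= Mt G Sf (lapn G u q) t0).
  { unfold Mt, Mass, cs, v.
    replace (ms G xs * lapn G u q xs t0 ^ 2) with (sumL (map (fun x => ms G x * lapn G u q x t0 ^ 2) (xs :: nil))) by (simpl; ring).
    apply sumL_sub.
    - constructor; [intros []| constructor].
    - intros y [<-|[]]; auto.
    - intros x _. assert (0 < ms G x) by apply ms_pos. assert (0 <= lapn G u q x t0 ^ 2) by apply pow2_ge_0. nra. }
  assert (Hbd := HC R HR1). fold r in Hbd.
  assert (C / (1 + R) < cs).
  { apply Rmult_lt_reg_r with (r := 1 + R); [lra|]. unfold Rdiv. rewrite Rmult_assoc, Rinv_l by lra.
    assert (C <= C / cs * cs) by (right; field; lra).
    assert (C / cs * cs < R * cs) by (apply Rmult_lt_compat_r; [lra| unfold R; lra]).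
    nra. }
  assert (2 * / r ^ 2 * ((3 * (/ r ^ 2) ^ 2) ^ q * (R ^ 2 * ((Cu * Rpower (1 + (R + rho o x1)) k) ^ 2 * (Rabs Cg * Rpower (1 + R) alpha))))
          = 2 * / r ^ 2 * (3 * (/ r ^ 2) ^ 2) ^ q * (R ^ 2 * ((Cu * Rpower (1 + (R + rho o x1)) k) ^ 2 * (Rabs Cg * Rpower (1 + R) alpha)))) by ring.
  lra.
Qed.


Lemma ballR (x e y : R) : ball x e y -> Rabs (y - x) < e.
Proof. intros H. exact H. Qed.
Lemma ballR' (x e y : R) : Rabs (y - x) < e -> ball x e y.
Proof. intros H. exact H. Qed.

Lemma Derive_n_lapn {V} (G : wgraph V) u : ancient G u ->
  forall j x t, t < 0 -> Derive_n (u x) j t = lapn G u j x t.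
Proof.
  intros Hu j. induction j as [|j IH]; intros x t Ht.
  - reflexivity.
  - simpl. rewrite (Derive_ext_loc _ (lapn G u j x)).
    + apply is_derive_unique. apply (sol_lapn G u Hu j); auto.
    + assert (He : 0 < - t) by lra. exists (mkposreal _ He). intros y Hy. apply ballR in Hy. simpl in Hy.
      apply IH. unfold Rabs in Hy; destruct Rcase_abs in Hy; lra.
Qed.

Lemma sum_seq_S (e : nat -> R) t n :
  sumL (map (fun i => e i * t^i) (seq 0 (S n))) = e O + sumL (map (fun i => e (S i) * t^(S i)) (seq 0 n)).
Proof.
  simpl (seq 0 (S n)). simpl map. simpl sumL. rewrite <- seq_shift, map_map. f_equal. ring.
Qed.

Lemma poly_ind (n : nat) : forall (f : nat -> R -> R),
  (forall j t, t < 0 -> is_derive (f j) t (f (S j) t)) -> (forall t, t < 0 -> f n t = 0) ->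
  exists d : nat -> R, forall t, t < 0 -> f O t = sumL (map (fun i => d i * t^i) (seq 0 n)).
Proof.
  induction n as [|n IH]; intros f Hd Hz.
  - exists (fun _ => 0). intros t Ht. simpl. apply Hz; auto.
  - destruct (IH (fun j => f (S j))) as [d Hdd]; auto.
    set (P := fun s => sumL (map (fun i => d i / (INR i + 1) * s^(S i)) (seq 0 n))).
    assert (HP : forall t, is_derive P t (sumL (map (fun i => d i * t^i) (seq 0 n)))).
    { intros t. unfold P. apply (D_sumL (fun i s => d i / (INR i + 1) * s^(S i))). intros i _.
      eapply D_val. apply D_scal. apply (is_derive_pow (fun s => s) (S i) t 1). apply (is_derive_id t).
      rewrite S_INR. simpl pred. assert (0 <= INR i) by apply pos_INR. field. lra. }
    set (c := f O (-1) - P (-1)).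
    assert (Hc : forall t, t < 0 -> f O t - P t = c).
    { intros t Ht. unfold c.
      destruct (MVT_gen (fun s => f O s - P s) t (-1) (fun _ => 0)) as [z [Hz1 Hz2]].
      - intros y Hy. assert (y < 0) by (destruct Hy as [_ Hy]; apply Rlt_le_trans with (1 := Hy); apply Rmax_lub; lra).
        eapply D_val. apply D_minus; [apply Hd; auto| apply HP]. rewrite Hdd by auto. ring.
      - intros y Hy. assert (y < 0) by (destruct Hy as [_ Hy]; apply Rle_lt_trans with (1 := Hy); apply Rmax_lub_lt; lra).
        apply continuity_pt_filterlim. apply C_minus.
        + apply (ex_derive_continuous (f O)). eexists. apply Hd; auto.
        + apply (ex_derive_continuous P). eexists. apply HP.
      - simpl in Hz2. lra. }
    exists (fun i => match i with O => c | S i => d i / (INR i + 1) end).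
    intros t Ht. rewrite sum_seq_S. cbv beta iota. rewrite <- (Hc t Ht). unfold P. ring.
Qed.

Lemma left_cont (f : R -> R) l : is_left_derive f 0 l ->
  forall eps, 0 < eps -> exists del, 0 < del /\ forall h, - del < h < 0 -> Rabs (f h - f 0) < eps.
Proof.
  intros H eps He.
  assert (H1 : locally l (fun y => Rabs (y - l) < 1)).
  { exists (mkposreal 1 Rlt_0_1). intros y Hy. apply ballR in Hy. exact Hy. }
  specialize (H _ H1). destruct H as [[del Hdel] Hd]. simpl in Hd.
  set (del' := Rmin del (eps / (Rabs l + 2))).
  assert (Hl : 0 < Rabs l + 2) by (assert (0 <= Rabs l) by apply Rabs_pos; lra).
  exists del'. split.
  { unfold del'. apply Rmin_pos; auto. apply Rdiv_lt_0_compat; lra. }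
  intros h Hh.
  assert (Hh1 : - del < h) by (assert (del' <= del) by apply Rmin_l; lra).
  assert (Hh2 : - h <= eps / (Rabs l + 2)) by (assert (del' <= eps / (Rabs l + 2)) by apply Rmin_r; lra).
  specialize (Hd h). assert (Hb : ball 0 del h) by (apply ballR'; unfold Rabs; destruct Rcase_abs; lra).
  specialize (Hd Hb (proj2 Hh)). simpl in Hd.
  replace (0 + h) with h in Hd by ring.
  set (Q := (f h - f 0) / h) in Hd.
  assert (Hq : f h - f 0 = h * Q) by (unfold Q; field; lra).
  rewrite Hq, Rabs_mult.
  assert (Rabs Q < Rabs l + 1).
  { assert (T := Rabs_triang (Q - l) l). replace (Q - l + l) with Q in T by ring. lra. }
  rewrite (Rabs_left h) by lra.
  assert (0 <= Rabs Q) by apply Rabs_pos.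
  assert (- h * Rabs Q <= eps / (Rabs l + 2) * (Rabs l + 1)).
  { apply Rmult_le_compat; lra. }
  assert (eps / (Rabs l + 2) * (Rabs l + 1) < eps).
  { apply Rmult_lt_reg_r with (r := Rabs l + 2); auto.
    replace (eps / (Rabs l + 2) * (Rabs l + 1) * (Rabs l + 2)) with (eps * (Rabs l + 1)) by (field; lra). nra. }
  lra.
Qed.

Lemma cont_eps (g : R -> R) x : continuous g x ->
  forall eps, 0 < eps -> exists del, 0 < del /\ forall h, Rabs (h - x) < del -> Rabs (g h - g x) < eps.
Proof.
  intros H eps He.
  assert (H1 : locally (g x) (fun y => Rabs (y - g x) < eps)).
  { exists (mkposreal eps He). intros y Hy. apply ballR in Hy. exact Hy. }
  destruct (H _ H1) as [[del Hdel] Hd]. exists del. split; [exact Hdel|].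
  intros h Hh. apply Hd. apply ballR'. exact Hh.
Qed.


Lemma poly_der (d : nat -> R) n t :
  is_derive (fun s => sumL (map (fun i => d i * s^i) (seq 0 n))) t
            (sumL (map (fun i => d i * (INR i * 1 * t^(pred i))) (seq 0 n))).
Proof.
  apply (D_sumL (fun i s => d i * s^i)). intros i _. apply D_scal.
  apply (is_derive_pow (fun s => s) i t 1). apply (is_derive_id t).
Qed.

Lemma extend0 (f g : R -> R) l : is_left_derive f 0 l -> continuous g 0 ->
  (forall t, t < 0 -> f t = g t) -> f 0 = g 0.
Proof.
  intros Hf Hg Heq.
  destruct (Req_dec (f 0 - g 0) 0) as [H|H]; [lra|].
  set (e := Rabs (f 0 - g 0)).
  assert (He : 0 < e) by (apply Rabs_pos_lt; auto).
  destruct (left_cont f l Hf (e / 2) ltac:(lra)) as [d1 [Hd1 H1]].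
  destruct (cont_eps g 0 Hg (e / 2) ltac:(lra)) as [d2 [Hd2 H2]].
  set (h := - Rmin d1 d2 / 2).
  assert (Hm : 0 < Rmin d1 d2) by (apply Rmin_pos; auto).
  assert (Hm1 : Rmin d1 d2 <= d1) by apply Rmin_l.
  assert (Hm2 : Rmin d1 d2 <= d2) by apply Rmin_r.
  assert (A := H1 h ltac:(unfold h; lra)).
  assert (B := H2 h ltac:(unfold h; rewrite Rminus_0_r, Rabs_left; lra)).
  rewrite Heq in A by (unfold h; lra).
  assert (T := Rabs_triang (f 0 - g h) (g h - g 0)).
  replace (f 0 - g h + (g h - g 0)) with (f 0 - g 0) in T by ring.
  rewrite Rabs_minus_sym in A. fold e in T. lra.
Qed.

Theorem corollary3p2 (V : Type) (G : wgraph V) (rho : V -> V -> R)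
  (alpha k : R) (u : V -> R -> R) (q : nat) :
  intrinsic G rho -> finite_balls rho -> finite_jump G rho ->
  poly_growth_with G rho alpha ->
  0 < k -> in_Pk G rho k u ->
  4 * INR q > 2 * k + alpha + 2 ->
  (forall x t, t < 0 -> Derive_n (u x) q t = 0) /\
  exists p : nat -> V -> R, forall x t, t <= 0 ->
    u x t = sumL (map (fun i => p i x * t ^ i) (seq 0 q)).
Proof.
  intros Hi Hf Hj Hg Hk HP Hq.
  assert (Hz := lapq_zero G rho alpha k u q Hi Hf Hj Hg Hk HP Hq).
  destruct HP as [Hu _].
  split.
  - intros x t Ht. rewrite (Derive_n_lapn G u Hu q x t Ht). apply Hz; auto.
  - assert (Hex : forall x, exists d : nat -> R, forall t, t < 0 -> u x t = sumL (map (fun i => d i * t^i) (seq 0 q))).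
    { intros x. apply (poly_ind q (fun j => lapn G u j x)).
      - intros j t Ht. apply (sol_lapn G u Hu j x t Ht).
      - intros t Ht. apply Hz; auto. }
    exists (fun i x => proj1_sig (constructive_indefinite_description _ (Hex x)) i).
    intros x t Ht.
    destruct (constructive_indefinite_description _ (Hex x)) as [d Hd]. simpl.
    destruct (Rlt_or_le t 0) as [Hlt|Hge]; [apply Hd; auto|].
    assert (t = 0) by lra. subst t.
    apply (extend0 (u x) (fun s => sumL (map (fun i => d i * s^i) (seq 0 q))) _ (proj2 (Hu x))).
    + apply (ex_derive_continuous (fun s => sumL (map (fun i => d i * s^i) (seq 0 q)))).
      eexists. apply poly_der.
    + exact Hd.
Qed.
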